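(* Let $\pi_n,\pi\in\mathcal P(\mathbb R^d)$ and let $Q_n,Q$ be $M$-cell quantizers. If $\pi_nQ_n\to\pi Q$ in total variation, then for every $m\in\{1,\dots,M\}$ with $\pi(Q^{-1}(m))>0$ we have $\hat\pi(m,\pi_n,Q_n)\to\hat\pi(m,\pi,Q)$ in total variation.
   Context: Let $\phi(\cdot|x)$, $x\in\mathbb R^d$, be a family of probability densities on $\mathbb R^d$ (the transition densities of the source $x_{t+1}=f(x_t,w_t)$), jointly measurable and uniformly bounded: $\phi(z|x)\le C$ for all $x,z$. An $M$-cell quantizer is a Borel map $Q:\mathbb R^d\to\{1,\dots,M\}$; for $P\in\mathcal P(\mathbb R^d)$, $PQ$ is the measure on $\mathbb R^d\times\{1,\dots,M\}$ with $PQ(A\times\{i\})=P(A\cap Q^{-1}(i))$. For $\pi\in\mathcal P(\mathbb R^d)$, a quantizer $Q$ and $m$ with $\pi(Q^{-1}(m))>0$, $\hat\pi(m,\pi,Q)$ is the probability measure with density $$z\mapsto\frac{1}{\pi(Q^{-1}(m))}\int_{Q^{-1}(m)}\phi(z|x)\,\pi(dx)$$ (the conditional law of $x_{t+1}$ given $\pi_t=\pi$, $Q_t=Q$, $q_t=m$). *)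

(* Defs.v *)
From HB Require Import structures.
From mathcomp Require Import all_boot all_order all_algebra.
From mathcomp Require Import all_classical all_reals all_analysis.
Set Implicit Arguments. Unset Strict Implicit. Unset Printing Implicit Defensive.
Import Order.TTheory GRing.Theory Num.Theory.
Import numFieldNormedType.Exports.
Local Open Scope classical_set_scope.
Local Open Scope ring_scope.

Record msp (R : realType) := MSp {
  msp_disp : measure_display;
  msp_type : measurableType msp_disp;
  msp_meas : {measure set msp_type -> \bar R} }.

(* Rspace R k = R^(k+1) with its Borel sigma-algebra (iterated product of
   the Borel sigma-algebra of R) and Lebesgue measure (iterated product
   of the Lebesgue measure on R). *)
Fixpoint Rspace (R : realType) (k : nat) : msp R :=
  match k with
  | 0 => @MSp R _ (measurableTypeR R) (@lebesgue_measure R)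
  | k'.+1 => let P := Rspace R k' in
      @MSp R _ (msp_type P * measurableTypeR R)%type
        (msp_meas P \x @lebesgue_measure R)%E
  end.

(* R^d (for d >= 1) and Lebesgue measure on it. *)
Definition Rd (R : realType) (d : nat) : measurableType _ :=
  msp_type (Rspace R d.-1).
Definition lebRd (R : realType) (d : nat) : set (Rd R d) -> \bar R :=
  msp_meas (Rspace R d.-1).

Section defs.
Context {dT : measure_display} {T : measurableType dT} {R : realType}.
Local Open Scope ereal_scope.

(* Q : T -> {1..M} (here 'I_M) is a Borel quantizer: every cell is measurable
   (the discrete sigma-algebra on the finite set of cells). *)
Definition quantizer (M : nat) (Q : T -> 'I_M) : Prop :=
  forall i : 'I_M, measurable (Q @^-1` [set i]).

(* Measurable subsets of T x {1..M} (product with the discrete sigma-algebra):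
   exactly the sets all of whose sections are measurable. *)
Definition prod_measurable (M : nat) (A : set (T * 'I_M)) : Prop :=
  forall i : 'I_M, measurable [set x | A (x, i)].

(* The measure PQ on T x {1..M}: PQ(A x {i}) = P(A /\ Q^-1(i)). *)
Definition quant_meas (M : nat) (P : set T -> \bar R) (Q : T -> 'I_M)
    (A : set (T * 'I_M)) : \bar R :=
  \sum_(i < M) P ([set x | A (x, i)] `&` Q @^-1` [set i]).

Definition tv_dist {X : Type} (meas : set (set X))
    (mu nu : set X -> \bar R) : \bar R :=
  ereal_sup [set `|mu A - nu A| | A in meas].

(* density of pihat(m, P, Q): z |-> (1/P(Q^-1 m)) int_{Q^-1 m} phi(z|x) P(dx);
   phi z x stands for phi(z|x). *)
Definition pihat_density (phi : T -> T -> R) (P : set T -> \bar R) (M : nat)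
    (Q : T -> 'I_M) (m : 'I_M) (z : T) : \bar R :=
  (\int[P]_(x in Q @^-1` [set m]) (phi z x)%:E) *
    ((fine (P (Q @^-1` [set m])))^-1)%:E.

Definition pihat (leb : set T -> \bar R) (phi : T -> T -> R)
    (P : set T -> \bar R) (M : nat) (Q : T -> 'I_M) (m : 'I_M)
    (A : set T) : \bar R :=
  \int[leb]_(z in A) pihat_density phi P Q m z.

End defs.

(* Main.v *)
Require Import Defs.
From HB Require Import structures.
From mathcomp Require Import all_boot all_order all_algebra.
From mathcomp Require Import all_classical all_reals all_analysis.
From mathcomp Require Import measurable_realfun lra ring.
Import Order.TTheory GRing.Theory Num.Theory.
Import numFieldNormedType.Exports.
Local Open Scope classical_set_scope.
Local Open Scope ring_scope.
Set Implicit Arguments. Unset Strict Implicit. Unset Printing Implicit Defensive.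

Section Layer.
Context d (T : measurableType d) (R : realType).

Definition Sw (w : T -> R) := [set p : T * R | 0 <= p.2 /\ p.2 < w p.1].

Lemma mSw w : measurable_fun setT w -> measurable (Sw w).
Proof.
move=> mw.
have -> : Sw w = (setT `*` `[0, +oo[%classic) `&`
   [set p | ((p.2)%:E < (w p.1)%:E)%E].
  by apply/seteqP; split => -[x s] /=; rewrite /Sw/= in_itv/= andbT lte_fin; tauto.
apply: measurable_lte.
- exact: measurableX.
- apply/measurable_funTS; apply/(measurable_EFinP setT snd); exact: measurable_snd.
- apply/measurable_funTS; apply/(measurable_EFinP setT (fun p => w p.1)).
  apply: measurableT_comp => //; exact: measurable_fst.
Qed.

Lemma xsecSw w x : 0 <= w x -> (@lebesgue_measure R) (xsection (Sw w) x) = (w x)%:E.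
Proof.
move=> w0.
have -> : xsection (Sw w) x = `[0, w x[%classic.
  apply/seteqP; split => s /=; rewrite /xsection /= inE /Sw /= in_itv /=.
  by move=> [-> ->].  
  by move=> /andP[-> ->].
rewrite lebesgue_measure_itv /= lte_fin.
case: ltP => //= [_|]; first by rewrite sube0.
by move=> wle; apply/eqP; rewrite eq_sym eqe; rewrite eq_le w0 wle.
Qed.

Lemma ysecSw w s : ysection (Sw w) s = if 0 <= s then [set x | s < w x] else set0.
Proof.
apply/seteqP; split => x /=; rewrite /ysection /= inE /=.
  by move=> /= [s0 h]; rewrite s0.
by case: ifPn => //= s0 h; split.
Qed.

End Layer.


Section Aux.
Context (R : realType).
Local Open Scope ereal_scope.
Lemma abs_le_fin (a b : \bar R) (t : R) : a \is a fin_num -> b \is a fin_num ->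
  `|a - b| <= t%:E -> a <= b + t%:E /\ b <= a + t%:E.
Proof.
move=> fa fb; rewrite -(fineK fa) -(fineK fb) -EFinB /= lee_fin.
by rewrite ler_norml => /andP[h1 h2]; split; rewrite -EFinD lee_fin; lra.
Qed.
End Aux.

Section Layer2.
Context d (T : measurableType d) (R : realType).
Local Open Scope ereal_scope.

Lemma layer (P1 P2 : probability T R) (u v : T -> R) (t : R) :
  measurable_fun setT u -> measurable_fun setT v ->
  (forall x, 0 <= u x <= 1)%R -> (forall x, 0 <= v x <= 1)%R -> (0 <= t)%R ->
  (forall s, (0 <= s)%R ->
     `| P1 [set x | s < u x]%R - P2 [set x | s < v x]%R | <= t%:E) ->
  \int[P1]_x (u x)%:E <= \int[P2]_x (v x)%:E + t%:E.
Proof.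
move=> mu mv u01 v01 t0 H.
pose lam := @lebesgue_measure R.
have E (P : probability T R) (w : T -> R) : measurable_fun setT w -> (forall x, 0 <= w x <= 1)%R ->
    \int[P]_x (w x)%:E = \int[lam]_s P (ysection (Sw w) s).
  move=> mw w01.
  have := indic_fubini_tonelli P lam (mSw mw).
  rewrite indic_fubini_tonelli_FE ?indic_fubini_tonelli_GE; [|exact: mSw..] => <-.
  apply: eq_integral => x _ /=; rewrite xsecSw //; by case/andP: (w01 x).
rewrite (E _ _ mu u01) (E _ _ mv v01).
pose I : set R := `[0%R, 1%R]%classic.
have mI : measurable I by exact: measurable_itv.
have Z (P : probability T R) (w : T -> R) : (forall x, 0 <= w x <= 1)%R -> forall s, ~ I s ->
    P (ysection (Sw w) s) = 0.
  move=> w01 s; rewrite /I /= in_itv /= ysecSw.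
  case: (leP 0%R s) => s0 /=; last by rewrite measure0.
  move=> s1; have {}s1 : (1 < s)%R by rewrite ltNge; apply/negP => h; apply: s1; rewrite h.
  rewrite (_ : [set x | s < w x]%R = set0) ?measure0 //.
  apply/seteqP; split => x //= swx.
  by case/andP: (w01 x) => _ h; lra.
have ZI (P : probability T R) (w : T -> R) : (forall x, 0 <= w x <= 1)%R ->
    \int[lam]_s P (ysection (Sw w) s) = \int[lam]_(s in I) P (ysection (Sw w) s).
  move=> w01; rewrite [RHS]integral_mkcond; apply: eq_integral => s _.
  rewrite patchE; case: ifPn => // /negP sI; rewrite Z //.
  by move=> Is; apply: sI; rewrite inE.
rewrite (ZI _ _ u01) (ZI _ _ v01).
have mg (P : probability T R) (w : T -> R) : measurable_fun setT w ->
    measurable_fun I (fun s => P (ysection (Sw w) s)).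
  move=> mw; apply: measurable_funTS.
  exact: (measurable_fun_ysection P (mSw mw)).
apply: (@le_trans _ _ (\int[lam]_(s in I) (P2 (ysection (Sw v) s) + t%:E))).
  apply: ge0_le_integral.
  - exact: mI.
  - by move=> s _; exact: measure_ge0.
  - exact: mg.
  - by apply: emeasurable_funD => //; exact: mg.
  move=> s; rewrite /I /= in_itv /= => /andP[s0 s1].
  rewrite !ysecSw s0.
  have mA (w : T -> R) (mw : measurable_fun setT w) : measurable [set x | s < w x]%R.
    by have := measurable_ysection s (mSw mw); rewrite ysecSw s0.
  have [h _] := abs_le_fin (fin_num_measure _ _ (mA _ mu)) (fin_num_measure _ _ (mA _ mv)) (H s s0).
  exact: h.
rewrite ge0_integralD //; try exact: mg; try exact: measurable_cst;
  try (by move=> s _; exact: measure_ge0); try (by move=> s _; rewrite lee_fin).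
have lamI : lam I = 1 by rewrite /lam /I lebesgue_measure_itv /= lte01 sube0.
rewrite integral_cst // [X in t%:E * X](_ : _ = 1) ?mule1 //; exact: lamI.
Qed.
End Layer2.

Lemma arith (R : realType) (In I an a tn : R) : 0 < a -> a / 2 < an -> 0 <= I <= a ->
  `|In - I| <= tn -> `|an - a| <= tn -> `|In / an - I / a| <= 4 * tn / a.
Proof.
move=> a0 ana /andP[I0 Ia] hI ha.
have an0 : 0 < an by lra.
have tn0 : 0 <= tn by apply: le_trans hI.
have -> : In / an - I / a = ((In - I) * a + I * (a - an)) / (an * a).
  by field; apply/andP; split; rewrite gt_eqF.
have -> : 4 * tn / a = (4 * tn * an) / (an * a).
  by field; apply/andP; split; rewrite gt_eqF.
rewrite normrM [`|(an * a)^-1|]ger0_norm; last by rewrite invr_ge0 mulr_ge0 // ltW.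
apply: ler_wpM2r; first by rewrite invr_ge0 mulr_ge0 // ltW.
apply: (le_trans (ler_normD _ _)).
rewrite !normrM (ger0_norm (ltW a0)) (ger0_norm I0).
have h1 : `|In - I| * a <= tn * a by apply: ler_wpM2r => //; exact: ltW.
have h2 : I * `|a - an| <= a * tn.
  apply: (le_trans (ler_wpM2l I0 (_ : `|a - an| <= tn))); first by rewrite distrC.
  by apply: ler_wpM2r.
nra.
Qed.

Section SF.
Local Open Scope ereal_scope.
Context (R : realType) (dd : measure_display) (T : measurableType dd)
  (m1 : {measure set T -> \bar R}) (hm : sigma_finite setT m1).
Lemma sf_prod : sigma_finite setT (m1 \x (@lebesgue_measure R))%E.
Proof.
pose m2 := @lebesgue_measure R.
have /sigma_finiteP[F [TF ndF Foo]] := hm.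
have /sigma_finiteP[G [TG ndG Goo]] := sigma_finiteT m2.
exists (fun n => F n `*` G n).
 rewrite -setXTT TF TG predeqE => -[x y]; split.
    move=> [/= [n _ Fnx] [k _ Gky]]; exists (maxn n k) => //; split.
    - by move: x Fnx; exact/subsetPset/ndF/leq_maxl.
    - by move: y Gky; exact/subsetPset/ndG/leq_maxr.
  by move=> [n _ []/= ? ?]; split; exists n.
move=> k; have [? ?] := Foo k; have [? ?] := Goo k.
split; first exact: measurableX.
by rewrite product_measure1E// lte_mul_pinfty// ge0_fin_numE.
Qed.
End SF.

Lemma Rspace_sf (R : realType) k : sigma_finite setT (msp_meas (Rspace R k)).
Proof.
elim: k => [|k IH]; first exact: sigma_finiteT.
exact (@sf_prod R _ _ _ IH).
Qed.

Definition lebSF (R : realType) (d : nat) : sigma_finite_measure (Rd R d) R :=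
  @SigmaFiniteMeasure.Pack _ _ _ (msp_meas (Rspace R d.-1))
   (@SigmaFiniteMeasure.Class _ _ _ (msp_meas (Rspace R d.-1))
      (Measure.measure_function_isContent_mixin (Measure.class (msp_meas (Rspace R d.-1))))
      (Measure.measure_function_Content_isMeasure_mixin (Measure.class (msp_meas (Rspace R d.-1))))
      (@isSFinite.Axioms_ _ _ _ _ (sfinite_measure_sigma_finite (Rspace_sf R d.-1)))
      (@isSigmaFinite.Axioms_ _ _ _ _ (Rspace_sf R d.-1))).

Section Q.
Context d (T : measurableType d) (R : realType).
Local Open Scope ereal_scope.

Lemma qsec M (P : {measure set T -> \bar R}) (Q : T -> 'I_M) (m : 'I_M) (E : set T) :
  quant_meas P Q [set p | p.2 = m /\ E p.1] = P (E `&` Q @^-1` [set m]).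
Proof.
rewrite /quant_meas (bigD1 m) //= big1 ?adde0.
  by congr (P _); apply/seteqP; split => x /=; tauto.
move=> i im; rewrite (_ : [set x | i = m /\ E x] = set0) ?set0I ?measure0 //.
by apply/seteqP; split => x //= [h _]; move: im; rewrite h eqxx.
Qed.

Lemma tv_ge M (P1 P2 : {measure set T -> \bar R}) (Q1 Q2 : T -> 'I_M) (m : 'I_M)
  (E : set T) : measurable E ->
  `| P1 (E `&` Q1 @^-1` [set m]) - P2 (E `&` Q2 @^-1` [set m]) | <=
  tv_dist (@prod_measurable _ _ M) (quant_meas P1 Q1) (quant_meas P2 Q2).
Proof.
move=> mE; rewrite -!qsec; apply: ereal_sup_ubound.
exists [set p | p.2 = m /\ E p.1] => // i /=.
case: (eqVneq i m) => [->|im].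
  by rewrite (_ : [set x | m = m /\ E x] = E) //; apply/seteqP; split => x /=; tauto.
rewrite (_ : [set x | i = m /\ E x] = set0) //.
by apply/seteqP; split => x //= [h _]; move: im; rewrite h eqxx.
Qed.
End Q.

Section Main.
Context d (T : measurableType d) (R : realType) (lb : sigma_finite_measure T R)
  (phi : T -> T -> R)
  (phi_meas : measurable_fun setT (fun zx : T * T => phi zx.1 zx.2))
  (phi_ge0 : forall z x, 0 <= phi z x)
  (phi_dens : forall x, (\int[lb]_z (phi z x)%:E = 1)%E).
Local Open Scope ereal_scope.

Lemma int_indic (mu : {measure set T -> \bar R}) (A : set T) (g : T -> R) :
  \int[mu]_(z in A) (g z)%:E = \int[mu]_z (g z * \1_A z)%:E.
Proof.
rewrite integral_mkcond; apply: eq_integral => z _.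
by rewrite patchE indicE; case: (z \in A); rewrite ?mulr1 ?mulr0.
Qed.

Definition hA (A : set T) x := \int[lb]_(z in A) (phi z x)%:E.

Lemma mphi1 x : measurable_fun setT (fun z => phi z x).
Proof. exact: (measurableT_comp phi_meas (pair2_measurable x)). Qed.

Lemma hA_meas A : measurable A -> measurable_fun setT (hA A).
Proof.
move=> mA.
have mf : measurable_fun setT (fun zx : T * T => (phi zx.1 zx.2 * \1_A zx.1)%:E).
  change (measurable_fun setT (EFin \o (fun zx : T * T => phi zx.1 zx.2 * \1_A zx.1)%R)).
  apply/measurable_EFinP.
  apply: measurable_funM => //.
  exact: (measurableT_comp (measurable_indic mA) measurable_fst).
have f0 : forall zx : T * T, 0 <= (phi zx.1 zx.2 * \1_A zx.1)%:E.
  move=> zx; rewrite lee_fin; apply: mulr_ge0 => //.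
apply: (eq_measurable_fun (fubini_G lb (fun zx : T * T => (phi zx.1 zx.2 * \1_A zx.1)%:E))).
  by move=> x _; rewrite /fubini_G /hA [RHS]int_indic; apply: eq_integral.
exact: (measurable_fun_fubini_tonelli_G (fun zx : T * T => (phi zx.1 zx.2 * \1_A zx.1)%:E) mf f0).
Qed.

Lemma hA01 A x : measurable A -> 0 <= hA A x <= 1.
Proof.
move=> mA; apply/andP; split.
  by apply: integral_ge0 => z _; rewrite lee_fin.
rewrite -(phi_dens x); apply: ge0_subset_integral => //.
- by change (measurable_fun setT (EFin \o (fun z => phi z x))); apply/measurable_EFinP; exact: mphi1.
- by move=> z _; rewrite lee_fin.
Qed.

Lemma mG (P : probability T R) B : measurable B ->
  measurable_fun setT (fun z => \int[P]_(x in B) (phi z x)%:E).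
Proof.
move=> mB.
have mf : measurable_fun setT (fun zx : T * T => (phi zx.1 zx.2 * \1_B zx.2)%:E).
  change (measurable_fun setT (EFin \o (fun zx : T * T => phi zx.1 zx.2 * \1_B zx.2)%R)).
  apply/measurable_EFinP.
  apply: measurable_funM => //.
  exact: (measurableT_comp (measurable_indic mB) measurable_snd).
have f0 : forall zx : T * T, 0 <= (phi zx.1 zx.2 * \1_B zx.2)%:E.
  by move=> zx; rewrite lee_fin; apply: mulr_ge0.
apply: (eq_measurable_fun (fubini_F P (fun zx : T * T => (phi zx.1 zx.2 * \1_B zx.2)%:E))).
  by move=> x _; rewrite /fubini_F [RHS]int_indic; apply: eq_integral.
exact: (measurable_fun_fubini_tonelli_F (fun zx : T * T => (phi zx.1 zx.2 * \1_B zx.2)%:E) mf f0).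
Qed.

Lemma fub (P : probability T R) A B : measurable A -> measurable B ->
  \int[lb]_(z in A) \int[P]_(x in B) (phi z x)%:E = \int[P]_(x in B) hA A x.
Proof.
move=> mA mB.
pose f := fun zx : T * T => (phi zx.1 zx.2 * \1_A zx.1 * \1_B zx.2)%:E.
have mf : measurable_fun setT f.
  change (measurable_fun setT (EFin \o (fun zx : T * T => phi zx.1 zx.2 * \1_A zx.1 * \1_B zx.2)%R)).
  apply/measurable_EFinP.
  apply: measurable_funM => //; last exact: (measurableT_comp (measurable_indic mB) measurable_snd).
  apply: measurable_funM => //.
  exact: (measurableT_comp (measurable_indic mA) measurable_fst).
have f0 : forall zx : T * T, 0 <= f zx.
  by move=> zx; rewrite lee_fin; apply: mulr_ge0 => //; apply: mulr_ge0.
have := fubini_tonelli (m1 := lb) (m2 := P) f mf f0.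
have -> : \int[lb]_x \int[P]_y f (x, y) = \int[lb]_(z in A) \int[P]_(x in B) (phi z x)%:E.
  rewrite [RHS]integral_mkcond; apply: eq_integral => z _; rewrite patchE.
  case: ifPn => zA.
    by rewrite [RHS]int_indic; apply: eq_integral => x _; rewrite /f /= [\1_A _]indicE zA mulr1.
  rewrite (eq_integral (fun _ => 0)) ?integral0 // => x _; rewrite /f /=.
  by rewrite [\1_A _]indicE (negbTE zA) mulr0 mul0r.
move=> ->.
rewrite [RHS]integral_mkcond; apply: eq_integral => x _; rewrite patchE.
case: ifPn => xB.
  rewrite /hA [RHS]int_indic; apply: eq_integral => z _; rewrite /f /=.
  by rewrite [\1_B _]indicE xB mulr1.
rewrite (eq_integral (fun _ => 0)) ?integral0 // => z _; rewrite /f /=.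
by rewrite [\1_B _]indicE (negbTE xB) mulr0.
Qed.

Lemma pihatE (P : probability T R) M (Q : T -> 'I_M) m A :
  measurable A -> measurable (Q @^-1` [set m]) ->
  pihat lb phi P Q m A =
  (\int[P]_(x in Q @^-1` [set m]) hA A x) * ((fine (P (Q @^-1` [set m])))^-1)%:E.
Proof.
move=> mA mB; rewrite /pihat /pihat_density ge0_integralZr //.
- by rewrite fub.
- exact/measurable_funTS/mG.
- by move=> z _; apply: integral_ge0 => x _; rewrite lee_fin.
- by rewrite lee_fin invr_ge0 fine_ge0 // measure_ge0.
Qed.

Lemma abse_swap (a b : \bar R) : a \is a fin_num -> b \is a fin_num ->
  `|a - b| = `|b - a|.
Proof.
by move=> fa fb; rewrite -(fineK fa) -(fineK fb) -!EFinB /= distrC.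
Qed.

Theorem gen M (pin : nat -> probability T R) (pi : probability T R)
  (Qn : nat -> T -> 'I_M) (Q : T -> 'I_M)
  (Qn_q : forall n, quantizer (Qn n)) (Q_q : quantizer Q) :
  (fun n => tv_dist (@prod_measurable _ _ M)
      (quant_meas (pin n) (Qn n)) (quant_meas pi Q)) @ \oo --> 0%E ->
  forall m : 'I_M, (0 < pi (Q @^-1` [set m]))%E ->
    (\forall n \near \oo, (0 < pin n (Qn n @^-1` [set m]))%E) /\
    (fun n => tv_dist measurable
        (pihat lb phi (pin n) (Qn n) m)
        (pihat lb phi pi Q m)) @ \oo --> 0%E.
Proof.
move=> ht m pim.
set t := fun n => tv_dist _ _ _ in ht.
pose B := Q @^-1` [set m].
have mB : measurable B := Q_q m.
have mBn n : measurable (Qn n @^-1` [set m]) := Qn_q n m.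
have piBf : pi B \is a fin_num by exact: fin_num_measure.
pose a := fine (pi B).
have a0 : (0 < a)%R.
  by apply: fine_gt0; rewrite pim /= (le_lt_trans (probability_le1 _ mB)) ?ltry.
have piBE : pi B = a%:E by rewrite fineK.
have tA n E : measurable E ->
    `|pin n (E `&` Qn n @^-1` [set m]) - pi (E `&` B)| <= t n.
  by move=> mE; exact: tv_ge.
have t0 n : 0 <= t n.
  by apply: le_trans (tA n set0 measurable0); exact: abse_ge0.
have [tfin tcvg] := (fine_cvgP _ _).1 ht.
have ha2 : (0 < a / 2)%R by apply: divr_gt0.
have ev : \forall n \near \oo, t n = (fine (t n))%:E /\ (fine (t n) < a / 2)%R.
  apply: filterS2 tfin (@cvgr_lt _ _ _ _ (fine \o t) 0%R tcvg _ ha2) => n tf tl.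
  by split => //; rewrite fineK.
have ev2 : \forall n \near \oo, t n = (fine (t n))%:E /\ (fine (t n) < a / 2)%R /\
    pin n (Qn n @^-1` [set m]) = (fine (pin n (Qn n @^-1` [set m])))%:E /\
    (`|fine (pin n (Qn n @^-1` [set m])) - a| <= fine (t n))%R.
  apply: filterS ev => n [tE tl].
  have fn : pin n (Qn n @^-1` [set m]) \is a fin_num by exact: fin_num_measure.
  have := tA n setT measurableT; rewrite !setTI -[X in `|X - _|](fineK fn) piBE tE.
  by rewrite -EFinB /= lee_fin => h; split => //; split => //; rewrite fineK.
split.
  apply: filterS ev2 => n [_ [tl [-> h]]]; rewrite lte_fin.
  by move: h; rewrite ler_norml => /andP[h1 h2]; lra.
set TV := fun n => tv_dist _ _ _.
have bnd : \forall n \near \oo, 0 <= TV n <= ((4 * fine (t n)) / a)%:E.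
  apply: filterS ev2 => n [tE [tl [anE ha]]].
  pose Bn := Qn n @^-1` [set m].
  apply/andP; split.
    apply: (@le_trans _ _ (`|0 - 0| : \bar R)); first exact: abse_ge0.
    apply: ereal_sup_ubound; exists set0 => //.
    by rewrite /pihat !integral_set0.
  apply: ge_ereal_sup => _ [A mA <-].
  rewrite !pihatE //.
  have hbound (P : probability T R) (C : set T) : measurable C ->
      0 <= \int[P]_(x in C) hA A x <= P C.
    move=> mC; apply/andP; split.
      by apply: integral_ge0 => x _; case/andP: (hA01 x mA).
    rewrite -[X in _ <= X]mul1e -integral_cst //.
    apply: ge0_le_integral => //.
    - by move=> x _; case/andP: (hA01 x mA).
    - exact/measurable_funTS/hA_meas.
    - by move=> x _; case/andP: (hA01 x mA).
  pose u (C : set T) x := (fine (hA A x) * \1_C x)%R.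
  have hAf x : hA A x \is a fin_num.
    case/andP: (hA01 x mA) => h0 h1.
    by rewrite ge0_fin_numE // (le_lt_trans h1) ?ltry.
  have intu (P : probability T R) C : measurable C ->
      \int[P]_x (u C x)%:E = \int[P]_(x in C) hA A x.
    move=> mC; rewrite [RHS]integral_mkcond; apply: eq_integral => x _.
    rewrite patchE /u indicE; case: ifPn => _; first by rewrite mulr1 fineK.
    by rewrite mulr0.
  have mhf : measurable_fun setT (fun x => fine (hA A x)).
    exact: (measurableT_comp (fine_measurable measurableT) (hA_meas mA)).
  have mu C : measurable C -> measurable_fun setT (u C).
    by move=> mC; apply: measurable_funM => //; exact: measurable_indic.
  have u01 C x : (0 <= u C x <= 1)%R.
    case/andP: (hA01 x mA) => h0 h1; rewrite /u indicE.
    have f0 : (0 <= fine (hA A x))%R by rewrite fine_ge0.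
    have f1 : (fine (hA A x) <= 1)%R.
      by rewrite -lee_fin fineK.
    by case: (x \in C); rewrite ?mulr1 ?mulr0 ?lexx ?ler01 ?f0 ?f1.
  have secu C s : (0 <= s)%R ->
      [set x | s < u C x]%R = [set x | s < fine (hA A x)]%R `&` C.
    move=> s0; apply/seteqP; split => x /=; rewrite /u indicE.
      case: (boolP (x \in C)) => [xC|xC]; rewrite ?mulr1 ?mulr0 => h.
        by split => //; exact/set_mem.
      lra.
    by move=> [h xC]; rewrite (mem_set xC) mulr1.
  have mE s : measurable [set x | s < fine (hA A x)]%R.
    have := mhf measurableT _ (measurable_itv `]s, +oo[); rewrite setTI.
    congr measurable; apply/seteqP; split => x /=; rewrite in_itv /= andbT //.
  have t0' : (0 <= fine (t n))%R by rewrite fine_ge0.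
  have H1 := layer (mu _ (mBn n)) (mu _ mB) (u01 _) (u01 _) t0'
    (fun s s0 => ltac:(rewrite !secu // -tE; exact: (tA _ _ (mE s)))).
  have H2 := layer (P1 := pi) (P2 := pin n) (mu _ mB) (mu _ (mBn n)) (u01 _) (u01 _) t0'
    (fun s s0 => ltac:(rewrite !secu // -tE abse_swap;
       [exact: (tA _ _ (mE s))|apply: fin_num_measure; exact: measurableI..])).
  rewrite !intu // in H1 H2.
  set hn := \int[pin n]_(x in _) _ in H1 H2 *.
  set h := \int[pi]_(x in _) _ in H1 H2 *.
  have /andP[hn0 hn1] := hbound (pin n) _ (mBn n).
  have /andP[h0 h1] := hbound pi _ mB.
  have hnf : hn \is a fin_num.
    by rewrite ge0_fin_numE // (le_lt_trans hn1) // (le_lt_trans (probability_le1 _ (mBn n))) ?ltry.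
  have hf : h \is a fin_num.
    by rewrite ge0_fin_numE // (le_lt_trans h1) // (le_lt_trans (probability_le1 _ mB)) ?ltry.
  have hr0 : (0 <= fine h)%R by rewrite fine_ge0.
  have hr1 : (fine h <= a)%R by rewrite -lee_fin fineK // -piBE.
  move: H1 H2; rewrite -(fineK hnf) -(fineK hf).
  rewrite -!EFinD !lee_fin => H1 H2.
  rewrite /=.
  apply: arith => //.
  - by rewrite -/B -/a; move: ha; rewrite ler_norml => /andP[hb1 hb2]; lra.
  - by rewrite hr0 hr1.
  - by rewrite ler_norml; apply/andP; split; lra.
apply/fine_cvgP; split.
  apply: filterS bnd => n /andP[h0 h1].
  by rewrite ge0_fin_numE // (le_lt_trans h1) ?ltry.
apply: (@squeeze_cvgr _ _ _ _ (fun _ => 0%R) (fun n => 4 * fine (t n) / a)%R).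
- apply: filterS bnd => n /andP[h0 h1]; apply/andP; split.
    by rewrite /= fine_ge0.
  by rewrite /= -lee_fin fineK // ge0_fin_numE // (le_lt_trans h1) ?ltry.
- exact: cvg_cst.
- have := cvgMr_tmp (b := a^-1)%R (cvgMl_tmp (a := 4%R) tcvg).
  by rewrite mulr0 mul0r => H; exact: H.
Qed.

End Main.


Unset Implicit Arguments.

Theorem lemma6 (R : realType) (d : nat) (hd : (0 < d)%N) (M : nat)
  (phi : Rd R d -> Rd R d -> R)
  (phi_meas : measurable_fun setT (fun zx : Rd R d * Rd R d => phi zx.1 zx.2))
  (phi_ge0 : forall z x, 0 <= phi z x)
  (phi_dens : forall x, (\int[@lebRd R d]_z (phi z x)%:E = 1)%E)
  (C : R) (phi_le : forall z x, phi z x <= C)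
  (pin : nat -> probability (Rd R d) R) (pi : probability (Rd R d) R)
  (Qn : nat -> Rd R d -> 'I_M) (Q : Rd R d -> 'I_M)
  (Qn_q : forall n, quantizer (Qn n)) (Q_q : quantizer Q) :
  (fun n => tv_dist (@prod_measurable _ _ M)
      (quant_meas (pin n) (Qn n)) (quant_meas pi Q)) @ \oo --> 0%E ->
  forall m : 'I_M, (0 < pi (Q @^-1` [set m]))%E ->
    (\forall n \near \oo, (0 < pin n (Qn n @^-1` [set m]))%E) /\
    (fun n => tv_dist measurable
        (pihat (@lebRd R d) phi (pin n) (Qn n) m)
        (pihat (@lebRd R d) phi pi Q m)) @ \oo --> 0%E.
Proof.
move=> ht m pim.
exact: (gen (lb := lebSF R d) phi_meas phi_ge0 phi_dens Qn_q Q_q ht pim).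
Qed.
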